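(* Let $S\ge 1$ and $N^{\min}\ge 1$ be integers, and let $Q$ be a range query over dimensions $D^Q$ with $m=|D^Q|\ge 1$. Let $T$ be a table stored as clusters, and let $T'$ be obtained from $T$ by inserting a single row into one of its clusters. Assume every cluster of $T$ and of $T'$ has at most $S$ rows, and that $N^Q(T)\ge N^{\min}$. Then $$\bigl|\mathrm{Avg}_Q(T)-\mathrm{Avg}_Q(T')\bigr|\le \max\Bigl(\frac{\Delta_R}{N^{\min}},\ \frac{1}{N^{\min}+1}\Bigr),\qquad \text{where }\Delta_R=1-\Bigl(1-\tfrac1S\Bigr)^{m}.$$
   Context: A table is a finite multiset of rows; each row assigns a value to every dimension in a finite set $D$ of dimensions, each with a totally ordered domain. The table is stored as a set of clusters (disjoint sub-multisets of rows), each containing at most $S$ rows, where $S$ is a fixed positive integer (the cluster size). A range query $Q$ is given by a nonempty set $D^Q\subseteq D$ of dimensions and, for each $d\in D^Q$, an interval $[l_d,u_d]$. A row matches $Q$ if its value on each $d\in D^Q$ lies in $[l_d,u_d]$. For a cluster $C$ and $d\in D^Q$, define $R^d(C)=|\{r\in C: l_d\le r_d\le u_d\}|/S$, and define $R(C)=\prod_{d\in D^Q}R^d(C)$. For a nonempty cluster $C$ and a dimension $d$, let $v^d_{\min}(C)$ and $v^d_{\max}(C)$ be the minimum and maximum value of $d$ among the rows of $C$. The set $C^Q(T)$ of clusters covering $Q$ consists of the clusters $C$ of $T$ such that $[v^d_{\min}(C),v^d_{\max}(C)]\cap[l_d,u_d]\neq\emptyset$ for every $d\in D^Q$. Let $N^Q(T)=|C^Q(T)|$,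 and, when $N^Q(T)\ge1$, define $$\mathrm{Avg}_Q(T)=\frac{1}{N^Q(T)}\sum_{C\in C^Q(T)}R(C).$$ *)

(* Defs.v *)
From HB Require Import structures.
From mathcomp Require Import all_boot all_order all_algebra.
Set Implicit Arguments. Unset Strict Implicit. Unset Printing Implicit Defensive.
Import Order.TTheory GRing.Theory Num.Theory.

Section Clusters.
Variables (D : finType) (disp : D -> Order.disp_t)
          (V : forall d : D, orderType (disp d)).

Definition trow := forall d : D, V d.
(* A cluster is a finite multiset of rows (represented by a list). *)
Definition cluster := seq trow.
(* A table stored as clusters: the list of its (pairwise disjoint) clusters. *)
Definition table := seq cluster.

Record query := Query { qdims : {set D}; qlo : trow; qhi : trow }.

(* min / max of dimension d over the nonempty cluster r0 :: rs *)
Definition vmin (r0 : trow) (rs : cluster) (d : D) : V d :=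
  \big[Order.min/r0 d]_(r <- rs) r d.
Definition vmax (r0 : trow) (rs : cluster) (d : D) : V d :=
  \big[Order.max/r0 d]_(r <- rs) r d.

(* [a,b] ∩ [c,e] ≠ ∅ in a total order, i.e. max(a,c) <= min(b,e) *)
Definition itv_meet d (a b c e : V d) : bool :=
  (Order.max a c <= Order.min b e)%O.

Definition covers (Q : query) (C : cluster) : bool :=
  match C with
  | [::] => false
  | r0 :: rs => [forall d in qdims Q,
                   itv_meet (vmin r0 rs d) (vmax r0 rs d) (qlo Q d) (qhi Q d)]
  end.

Definition NQ (Q : query) (T : table) : nat := count (covers Q) T.

Local Open Scope ring_scope.
Variable R : realFieldType.

Definition Rd (S : nat) (Q : query) (C : cluster) (d : D) : R :=
  (count (fun r : trow => (qlo Q d <= r d <= qhi Q d)%O) C)%:R / S%:R.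

Definition Rc (S : nat) (Q : query) (C : cluster) : R :=
  \prod_(d in qdims Q) Rd S Q C d.

(* Avg_Q(T) = (1/N^Q(T)) sum_{C in C^Q(T)} R(C)  (meaningful when N^Q(T) >= 1) *)
Definition AvgQ (S : nat) (Q : query) (T : table) : R :=
  (\sum_(C <- T | covers Q C) Rc S Q C) / (NQ Q T)%:R.

Definition insert_row (T : table) (i : nat) (r : trow) : table :=
  set_nth [::] T i (r :: nth [::] T i).

End Clusters.

(* Main.v *)
Require Import Defs.
From HB Require Import structures.
From mathcomp Require Import all_boot all_order all_algebra.
From mathcomp Require Import ring lra zify.
Import Order.TTheory GRing.Theory Num.Theory.
Local Open Scope ring_scope.

Lemma caseA (R : realFieldType) (s x x' Dl : R) (N Nmin : nat) :
  (0 < Nmin)%N -> (Nmin <= N)%N -> 0 <= Dl -> `|x - x'| <= Dl ->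
  `|(s + x) / N%:R - (s + x') / N%:R| <= Dl / Nmin%:R.
Proof.
move=> Nm NN Dp hx.
have Np : (0 < N)%N by apply: leq_trans NN.
have N0 : (0 : R) < N%:R by rewrite ltr0n.
have M0 : (0 : R) < Nmin%:R by rewrite ltr0n.
rewrite -mulrBl (_ : s + x - (s + x') = x - x'); last by ring.
rewrite normrM normfV normr_nat.
apply: (@le_trans _ _ (Dl / N%:R)).
  by rewrite ler_wpM2r // invr_ge0 ltW.
apply: ler_wpM2l => //.
by rewrite lef_pV2 ?posrE // ler_nat.
Qed.

Lemma caseB (R : realFieldType) (s x : R) (N Nmin : nat) :
  (0 < Nmin)%N -> (Nmin <= N)%N -> 0 <= s -> s <= N%:R -> 0 <= x -> x <= 1 ->
  `|s / N%:R - (s + x) / N.+1%:R| <= (Nmin.+1%:R)^-1.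
Proof.
move=> Nm NN s0 sN x0 x1.
have Np : (0 < N)%N by apply: leq_trans NN.
have N0 : (0 : R) < N%:R by rewrite ltr0n.
have N1 : (0 : R) < N.+1%:R by rewrite ltr0n.
set a := s / N%:R.
have sa : s = a * N%:R by rewrite /a mulfVK // gt_eqF.
have a0 : 0 <= a by rewrite /a divr_ge0 // ltW.
have a1 : a <= 1 by rewrite /a ler_pdivrMr // mul1r.
have -> : a - (s + x) / N.+1%:R = (a - x) / N.+1%:R.
  rewrite sa -[N.+1]addn1 natrD.
  field. by rewrite natr1 pnatr_eq0.
rewrite normrM normfV normr_nat.
apply: (@le_trans _ _ (N.+1%:R^-1)).
  rewrite -[X in _ <= X]mul1r; apply: ler_wpM2r; first by rewrite invr_ge0 ltW.
  rewrite ler_norml; apply/andP; split; lra.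
by rewrite lef_pV2 ?posrE ?ltr0n // ler_nat.
Qed.
Local Open Scope ring_scope.

Lemma prod_diff (R : realFieldType) (I : Type) (ds : seq I) (x y : I -> R) (h : R) :
  0 <= h -> (forall d, 0 <= x d) -> (forall d, x d <= y d) ->
  (forall d, y d <= x d + h) -> (forall d, x d + h <= 1) ->
  [/\ 0 <= \prod_(d <- ds) x d, \prod_(d <- ds) x d <= \prod_(d <- ds) y d,
      \prod_(d <- ds) y d <= 1 &
      \prod_(d <- ds) y d - \prod_(d <- ds) x d <= 1 - (1 - h) ^+ size ds].
Proof.
move=> h0 x0 xy yx xh.
elim: ds => [|d ds [P0 PP P1 PD]] /=.
  by rewrite !big_nil; split=> //; rewrite expr0 subrr.
rewrite !big_cons exprS.
set P := \prod_(j <- ds) x j in P0 PP P1 PD *.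
set P' := \prod_(j <- ds) y j in PP P1 PD *.
set E := (1 - h) ^+ size ds in PD *.
have := x0 d; have := xy d; have := yx d; have := xh d.
move: (x d) (y d) => a b ha hb hab ha0.
split.
- exact: mulr_ge0.
- apply: ler_pM => //.
- have -> : (1 : R) = 1 * 1 by rewrite mul1r.
  apply: ler_pM => //; [lra | exact: le_trans PP | lra].
- nra.
Qed.

Lemma bigmin_mono disp (T : orderType disp) (I : Type) (s : seq I) (f : I -> T) a b :
  (Order.min b (\big[Order.min/a]_(x <- s) f x) <= \big[Order.min/b]_(x <- s) f x)%O.
Proof.
elim: s => [|c s IH]; first by rewrite !big_nil ge_min lexx.
rewrite !big_cons le_min !ge_min lexx orbT /=.
by rewrite ge_min in IH; case/orP: IH => ->; rewrite ?orbT.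
Qed.

Lemma bigmax_mono disp (T : orderType disp) (I : Type) (s : seq I) (f : I -> T) a b :
  (\big[Order.max/b]_(x <- s) f x <= Order.max b (\big[Order.max/a]_(x <- s) f x))%O.
Proof.
elim: s => [|c s IH]; first by rewrite !big_nil le_max lexx.
rewrite !big_cons ge_max !le_max lexx orbT /=.
by rewrite le_max in IH; case/orP: IH => ->; rewrite ?orbT.
Qed.

Lemma covers_cons (D : finType) (disp : D -> Order.disp_t) (V : forall d : D, orderType (disp d))
  (Q : query V) (C : cluster V) (r : trow V) :
  covers Q C -> covers Q (r :: C).
Proof.
case: C => [//|c0 cs] /=.
move/forall_inP => H; apply/forall_inP => d /H.
rewrite /Defs.itv_meet /Defs.vmin /Defs.vmax !big_cons !ge_max !le_min.
have m1 := @bigmin_mono _ _ _ cs (fun x => x d) (r d) (c0 d).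
have m2 := @bigmax_mono _ _ _ cs (fun x => x d) (r d) (c0 d).
set a := \big[Order.min/c0 d]_(j <- cs) j d in m1 *.
set b := \big[Order.max/c0 d]_(j <- cs) j d in m2 *.
set a' := \big[Order.min/r d]_(j <- cs) j d in m1 *.
set b' := \big[Order.max/r d]_(j <- cs) j d in m2 *.
move=> /andP[/andP[ab ae] /andP[cb ce]].
have h1 := le_trans (le_trans m1 ab) m2.
have h2 := le_trans m1 ae.
have h3 := le_trans cb m2.
by rewrite h1 h2 h3 ce.
Qed.

Section Main.
Variables (R : realFieldType) (D : finType) (disp : D -> Order.disp_t)
  (V : forall d : D, orderType (disp d)) (S : nat) (Q : query V).
Hypothesis S1 : (1 <= S)%N.

Lemma S0 : (0 : R) < S%:R. Proof. by rewrite ltr0n. Qed.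

Lemma Rd_ge0 C d : 0 <= Rd R S Q C d.
Proof. by rewrite /Rd divr_ge0. Qed.

Lemma Rd_le C d k : (count (fun r : trow V => (qlo Q d <= r d <= qhi Q d)%O) C + k <= S)%N ->
  Rd R S Q C d + k%:R / S%:R <= 1.
Proof.
move=> H; rewrite /Rd -mulrDl ler_pdivrMr; last exact: S0.
by rewrite mul1r -natrD ler_nat.
Qed.

Lemma Rd_cons C r d : Rd R S Q (r :: C) d =
  Rd R S Q C d + (qlo Q d <= r d <= qhi Q d)%O%:R / S%:R.
Proof. by rewrite /Rd /= natrD mulrDl addrC. Qed.

Lemma Rc_bounds C : (size C <= S)%N -> 0 <= Rc R S Q C <= 1.
Proof.
move=> HC.
have Hb : forall d, Rd R S Q C d + 0 <= 1.
  move=> d; have := Rd_le C d 0; rewrite mul0r addn0; apply.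
  exact: leq_trans (count_size _ _) HC.
have [h1 _ h3 _] := @prod_diff R _ (enum (qdims Q)) (Rd R S Q C) (Rd R S Q C) 0
  (lexx 0) (Rd_ge0 C) (fun d => lexx _) (fun d => ler_wpDr (lexx 0) (lexx _)) Hb.
by rewrite /Rc -big_enum h1 h3.
Qed.

Lemma Rc_diff C r : (size C < S)%N ->
  `|Rc R S Q C - Rc R S Q (r :: C)| <= 1 - (1 - S%:R^-1) ^+ #|qdims Q|.
Proof.
move=> HC.
have Hy : forall d, Rd R S Q C d <= Rd R S Q (r :: C) d.
  by move=> d; rewrite Rd_cons ler_wpDr // divr_ge0.
have Hz : forall d, Rd R S Q (r :: C) d <= Rd R S Q C d + S%:R^-1.
  move=> d; rewrite Rd_cons lerD2l -[X in _ <= X]mul1r.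
  apply: ler_wpM2r; first by rewrite invr_ge0 ltW ?S0.
  by case: (_ && _).
have Hb : forall d, Rd R S Q C d + S%:R^-1 <= 1.
  move=> d; have := Rd_le C d 1; rewrite mul1r; apply.
  by rewrite addn1; exact: leq_ltn_trans (count_size _ _) HC.
have [h1 h2 h3 h4] := @prod_diff R _ (enum (qdims Q)) (Rd R S Q C) (Rd R S Q (r :: C))
  (S%:R^-1) (ltW (elimT idP (etrans (invr_gt0 _) S0))) (Rd_ge0 C) Hy Hz Hb.
rewrite /Rc -!big_enum cardE distrC ger0_norm //.
by rewrite subr_ge0.
Qed.

Lemma sum_bounds (L : table V) : all (fun C => size C <= S)%N L ->
  0 <= \sum_(C <- L | covers Q C) Rc R S Q C <= (count (covers Q) L)%:R.
Proof.
elim: L => [|C L IH] /=; first by rewrite big_nil lexx.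
case/andP=> HC /IH /andP[h1 h2].
have /andP[c1 c2] := Rc_bounds C HC.
rewrite big_cons; case: (covers Q C) => /=.
  by rewrite addrC natrD addrC addr_ge0 // lerD.
by rewrite add0n h1 h2.
Qed.

End Main.

Theorem mainTheorem2 (R : realFieldType)
  (D : finType) (disp : D -> Order.disp_t) (V : forall d : D, orderType (disp d))
  (S Nmin : nat) (Q : query V) (T : table V) (i : nat) (r : trow V) :
  (1 <= S)%N -> (1 <= Nmin)%N ->
  (1 <= #|qdims Q|)%N ->
  (i < size T)%N ->
  all (fun C => size C <= S)%N T ->
  all (fun C => size C <= S)%N (insert_row T i r) ->
  (Nmin <= NQ Q T)%N ->
  `|AvgQ R S Q T - AvgQ R S Q (insert_row T i r)|
    <= Num.max ((1 - (1 - S%:R^-1) ^+ #|qdims Q|) / Nmin%:R)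
               (Nmin.+1%:R)^-1.
Proof.
move=> S1 Nm1 Qd iT allT allT' HN.
set A := take i T; set B := drop i.+1 T; set C := nth [::] T i.
have eT : T = A ++ C :: B by rewrite /A /B /C -drop_nth // cat_take_drop.
have eT' : insert_row T i r = A ++ (r :: C) :: B by rewrite /insert_row set_nthE iT.
rewrite eT' in allT' *; rewrite eT in allT HN *.
move: allT allT' HN; rewrite !all_cat /= => /andP[aA /andP[sC aB]] /andP[_ /andP[sC' _]].
have sb := @sum_bounds R D disp V S Q S1 (A ++ B).
rewrite all_cat aA aB in sb; have {}sb := sb isT.
rewrite big_cat count_cat in sb.
have cc : forall X (L : table V), count (covers Q) (X :: L) = (covers Q X + count (covers Q) L)%N by [].
rewrite /AvgQ /NQ !big_cat !count_cat !cc !big_cons.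
set sA := \sum_(C0 <- A | covers Q C0) Rc R S Q C0 in sb *.
set sB := \sum_(C0 <- B | covers Q C0) Rc R S Q C0 in sb *.
set nA := count (covers Q) A in sb *.
set nB := count (covers Q) B in sb *.
have Dge0 : (0 : R) <= 1 - (1 - S%:R^-1) ^+ #|qdims Q|.
  exact: le_trans (normr_ge0 _) (@Rc_diff R D disp V S Q S1 C r sC').
case cC: (covers Q C).
  rewrite (@covers_cons D disp V Q C r cC) /= => HN.
  rewrite le_max; apply/orP; left.
  rewrite (_ : sA + (Rc R S Q C + sB) = (sA + sB) + Rc R S Q C); last by ring.
  rewrite (_ : sA + (Rc R S Q (r :: C) + sB) = (sA + sB) + Rc R S Q (r :: C)); last by ring.
  apply: caseA => //.
  exact: (@Rc_diff R D disp V S Q S1 C r sC').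
case cC': (covers Q (r :: C)) => /= HN.
  rewrite le_max; apply/orP; right.
  rewrite (_ : sA + (Rc R S Q (r :: C) + sB) = (sA + sB) + Rc R S Q (r :: C)); last by ring.
  rewrite (_ : (nA + (1 + nB))%N = (nA + nB).+1); last by rewrite addnCA.
  have /andP[x0 x1] := @Rc_bounds R D disp V S Q S1 (r :: C) sC'.
  have /andP[s0 s1] := sb.
  apply: caseB => //; by rewrite -natrD.
rewrite subrr normr0 le_max; apply/orP; right.
by rewrite invr_ge0.
Qed.
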